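(* Let $n\ge 3$ and let $\Gamma\subset GL(n,\mathbb R)$ be the group of block matrices $\begin{pmatrix} A & b\\ 0 & 1\end{pmatrix}$ with $A\in GL(n-1,\mathbb Z)$ and $b\in\mathbb Z^{n-1}$, acting linearly on $\mathbb R^n$. Then every non-zero $x\in\mathbb R^n$ has unbounded $\Gamma$-orbit (so the action of $\Gamma$ on $\mathbb R^n$ is expansive), yet no element $\gamma\in\Gamma$ is an expansive automorphism of $\mathbb R^n$, i.e. for no $\gamma\in\Gamma$ does the cyclic group $\{\gamma^m:m\in\mathbb Z\}$ act expansively on $\mathbb R^n$.
   Context: An action of a group $\Gamma$ on $\mathbb R^n$ (additive topological group) by linear automorphisms is expansive if there is a neighborhood $U$ of $0$ with $\bigcap_{\gamma\in\Gamma}\gamma^{-1}(U)=\{0\}$. *)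

(* Defs.v *)
From HB Require Import structures.
From mathcomp Require Import all_boot all_order all_algebra.
From mathcomp Require Import all_classical all_reals all_analysis.
Set Implicit Arguments. Unset Strict Implicit. Unset Printing Implicit Defensive.
Import Order.TTheory GRing.Theory Num.Theory.
Import numFieldNormedType.Exports.
Local Open Scope classical_set_scope.
Local Open Scope ring_scope.

Definition intmx (R : realType) (p q : nat) (A : 'M[int]_(p, q)) : 'M[R]_(p, q) :=
  map_mx (fun z : int => z%:~R) A.

(* Gamma (for n = m + 1): the block matrices [[A, b], [0, 1]] with
   A in GL(m, Z) and b in Z^m. *)
Definition Gamma (R : realType) (m : nat) : set 'M[R]_(m + 1) :=
  [set M | exists (A : 'M[int]_m) (b : 'cV[int]_m),
      A \in unitmx /\
      M = block_mx (intmx R A) (intmx R b) 0 (1%:M : 'M[R]_1)].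

Arguments Gamma R m : clear implicits.

Definition expansive (R : realType) (n : nat) (G : set 'M[R]_n) : Prop :=
  exists U : set 'cV[R]_n, nbhs (0 : 'cV[R]_n) U /\
    \bigcap_(g in G) ((fun x : 'cV[R]_n => g *m x) @^-1` U) = [set 0].

Definition cyclic_group (R : realType) (n : nat) (g : 'M[R]_n) : set 'M[R]_n :=
  [set M | exists k : nat, M = iter k (mulmx g) 1%:M \/
                           M = iter k (mulmx (invmx g)) 1%:M].

Definition bounded_orbit (R : realType) (n : nat) (G : set 'M[R]_n)
  (x : 'cV[R]_n) : Prop :=
  exists C : R, forall g, G g -> `|g *m x| <= C.

(* Main.v *)
Require Import Defs.
From HB Require Import structures.
From mathcomp Require Import all_boot all_order all_algebra.
From mathcomp Require Import all_classical all_reals all_analysis.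
Import Order.TTheory GRing.Theory Num.Theory.
Import numFieldNormedType.Exports.
From mathcomp Require Import lra zify.
Local Open Scope classical_set_scope.
Local Open Scope ring_scope.
Lemma entry_le (R : realType) p q (M : 'M[R]_(p, q)) i j : `|M i j| <= `|M|.
Proof.
have /mapP[k Hk ->] : `|M i j| \in [seq `|M x.1 x.2| | x : 'I_p * 'I_q].
  by apply/mapP; exists (i, j) => //=; rewrite mem_enum.
by change (`|M|) with (mx_norm M); rewrite mx_normrE; apply/bigmax_geP; right => /=; exists k.
Qed.

Lemma unbounded_lin (R : realType) (a b C : R) : b != 0 ->
  ~ (forall k : nat, `|a + k%:R * b| <= C).
Proof.
move=> b0 H.
have C0 : 0 <= C by apply: le_trans (H 0%N); rewrite normr_ge0.
have hx : 0 <= (C + `|a|) / `|b| by rewrite divr_ge0 ?addr_ge0 ?normr_ge0.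
have := archi_boundP hx; set k := Num.bound _ => hk.
have := H k.
have nb : 0 < `|b| by rewrite normr_gt0.
rewrite ltr_pdivrMr // in hk.
have : `|k%:R * b| - `|a| <= `|a + k%:R * b|.
  by rewrite (addrC a) lerB_normD.
rewrite normrM normr_nat => h1 h2.
have := le_trans h1 h2; rewrite lerBlDr. move: hk. lra.
Qed.
Lemma fixed_vec (R : realType) m (g : 'M[R]_(m + 1)) : Gamma R m g ->
  exists w : 'cV[R]_(m + 1), w != 0 /\ g *m w = w.
Proof.
move=> [A [b [_ ->]]].
set G := block_mx _ _ _ _.
have hd : \det (G - 1%:M)^T == 0.
  rewrite det_tr /G (scalar_mx_block m 1 (1 : R)) opp_block_mx add_block_mx.
  by rewrite subrr det_ublock subrr det0 mulr0.
have [v v0 hv] := det0P hd.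
exists v^T; split; first by rewrite trmx_eq0.
apply/eqP; rewrite -subr_eq0; apply/eqP.
have := congr1 trmx hv; rewrite trmx_mul trmxK trmx0 mulmxBl mul1mx => ->.
done.
Qed.

Lemma iter_fix (R : realType) n (g : 'M[R]_n) (w : 'cV[R]_n) : g *m w = w ->
  forall k, iter k (mulmx g) (1%:M : 'M[R]_n) *m w = w.
Proof.
move=> h; elim=> [|k ih] /=; first by rewrite mul1mx.
by rewrite -mulmxA ih.
Qed.

Lemma inv_fix (R : realType) n (g : 'M[R]_n) (w : 'cV[R]_n) : g *m w = w -> invmx g *m w = w.
Proof.
move=> h; have [u|nu] := boolP (g \in unitmx).
  by rewrite -{1}h mulKmx.
by rewrite invmx_out.
Qed.
Section S.
Variable R : realType.

Lemma intmxD p q (A B : 'M[int]_(p, q)) : intmx R (A + B) = intmx R A + intmx R B.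
Proof. by apply/matrixP => i j; rewrite !mxE rmorphD. Qed.

Lemma intmx1 p : intmx R (1%:M : 'M[int]_p) = 1%:M.
Proof. by apply/matrixP => i j; rewrite !mxE; case: (i == j). Qed.

Lemma intmx0 p q : intmx R (0 : 'M[int]_(p, q)) = 0.
Proof. by apply/matrixP => i j; rewrite !mxE. Qed.

Lemma intmxZD p q (k : nat) (i : 'I_p) (j : 'I_q) :
  intmx R ((k%:Z) *: delta_mx i j) = k%:R *: delta_mx i j.
Proof.
apply/matrixP => a b; rewrite !mxE.
by case: (_ && _); rewrite /= ?mulr1 ?mulr0.
Qed.

Lemma delta_mul_entry p q r (i : 'I_p) (j : 'I_q) (y : 'M[R]_(q, r)) l :
  (delta_mx i j *m y) i l = y j l.
Proof.
rewrite mxE (bigD1 j) //= big1 ?addr0; first by rewrite mxE !eqxx mul1r.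
by move=> a /negbTE ha; rewrite mxE ha andbF mul0r.
Qed.


Lemma GammaA m (i0 : 'I_m) (k : nat) :
  Gamma R m (block_mx (intmx R 1%:M) (intmx R (k%:Z *: delta_mx i0 (0 : 'I_1))) 0 1%:M).
Proof. by exists 1%:M, (k%:Z *: delta_mx i0 0); rewrite unitmx1. Qed.

Lemma GammaB m (i j : 'I_m) (k : nat) : i != j ->
  Gamma R m (block_mx (intmx R (1%:M + k%:Z *: delta_mx i j)) (intmx R 0) 0 1%:M).
Proof.
move=> ij; exists (1%:M + k%:Z *: delta_mx i j), 0; split => //.
have : (1%:M + k%:Z *: delta_mx i j) *m (1%:M - k%:Z *: delta_mx i j) = 1%:M.
  rewrite mulmxDl !mulmxBr !mul1mx !mulmx1 -scalemxAl -scalemxAr.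
  rewrite mul_delta_mx_0 ?scaler0 ?subr0 1?eq_sym //.
  by rewrite subrK.
by case/mulmx1_unit.
Qed.

Lemma part1 m (hm : (2 <= m)%N) (x : 'cV[R]_(m + 1)) :
  x != 0 -> ~ bounded_orbit (Gamma R m) x.
Proof.
move=> x0 [C hC].
rewrite -(vsubmxK x) in x0 hC.
set y := usubmx x in x0 hC *; set t := dsubmx x in x0 hC *.
have m0 : (0 < m)%N by apply: leq_trans hm.
pose i0 : 'I_m := Ordinal m0.
have [t0|t0] := eqVneq t 0.
- have y0 : y != 0 by apply: contraNneq x0 => ->; rewrite t0 col_mx0.
  have [j hj] : exists j, y j 0 != 0.
    apply: contrapT => h; apply: (negP y0); apply/eqP/matrixP => a l.
    have -> : l = 0 by apply/val_inj; case: l => -[]. 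
    rewrite [RHS]mxE; apply/eqP/negPn/negP => ha; apply: h; exists a; exact: ha.
  pose i1 : 'I_m := Ordinal hm.
  pose i := if (val j == 0)%N then i1 else i0.
  have ij : i != j.
    rewrite /i; case: ifP => /eqP hj0; apply/eqP => /(congr1 val) /= e;
    by move: hj0; rewrite /= -e.
  apply: (@unbounded_lin R (y i 0) _ C hj) => k.
  have := hC _ (@GammaB m i j k ij).
  apply: le_trans.
  rewrite mul_block_col.
  apply: le_trans _ (@entry_le R _ _ _ (lshift 1 i) 0).
  rewrite le_eqVlt; apply/orP; left; apply/eqP; congr (`|_|).
  rewrite col_mxEu intmxD intmx1 intmxZD intmx0 mul0mx addr0.
  rewrite mulmxDl mul1mx -scalemxAl.
  rewrite [RHS]mxE; congr (_ + _); rewrite [RHS]mxE; congr (_ * _); exact/esym/delta_mul_entry.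
- have tt : t 0 0 != 0.
    apply: contraNneq t0 => h; apply/eqP/matrixP => a l.
    have -> : a = 0 by apply/val_inj; case: a => -[].
    have -> : l = 0 by apply/val_inj; case: l => -[].
    by rewrite h mxE.
  apply: (@unbounded_lin R (y i0 0) _ C tt) => k.
  have := hC _ (@GammaA m i0 k).
  apply: le_trans.
  rewrite mul_block_col.
  apply: le_trans _ (@entry_le R _ _ _ (lshift 1 i0) 0).
  rewrite le_eqVlt; apply/orP; left; apply/eqP; congr (`|_|).
  rewrite col_mxEu intmx1 intmxZD mul1mx -scalemxAl.
  rewrite [RHS]mxE; congr (_ + _); rewrite [RHS]mxE; congr (_ * _); exact/esym/delta_mul_entry.
Qed.

End S.

(* n = m + 1 with n >= 3, i.e. m >= 2. *)
Theorem mainTheorem11 (R : realType) (m : nat) (hm : (2 <= m)%N) :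
  (forall x : 'cV[R]_(m + 1), x != 0 -> ~ bounded_orbit (Gamma R m) x) /\
  expansive (Gamma R m) /\
  (forall g : 'M[R]_(m + 1), Gamma R m g -> ~ expansive (cyclic_group g)).
Proof.
split; first exact: part1.
split.
  exists [set x | `|x| < 1]; split.
    have := (@nbhs0_lt R 'cV[R]_(m+1) 1 ltr01). exact.
  apply/seteqP; split => x.
    move=> hx; apply: contrapT => nx.
    apply: (@part1 R m hm x); first by apply/eqP.
    by exists 1 => g hg; apply: ltW; exact: (hx g hg).
  by move=> -> g _ /=; rewrite mulmx0 normr0 ltr01.
move=> g hg [U [hU hI]].
have [w [w0 hw]] := @fixed_vec R m g hg.
move/nbhs_norm0P: hU => [e /= e0 he].
have nw : 0 < `|w| by rewrite normr_gt0.
pose c := e / 2 / `|w|.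
have c0 : 0 < c by rewrite /c !divr_gt0.
have hc : [set 0] (c *: w).
  rewrite -hI => M [k [->|->]] /=; rewrite -scalemxAr.
    rewrite (@iter_fix R _ g w hw); apply: he => /=.
    by rewrite normrZ gtr0_norm // /c divfK ?gt_eqF //; lra.
  rewrite (@iter_fix R _ (invmx g) w (@inv_fix R _ g w hw)).
  apply: he => /=.
  by rewrite normrZ gtr0_norm // /c divfK ?gt_eqF //; lra.
move: hc => /= /eqP; rewrite scaler_eq0 (negbTE w0) orbF gt_eqF //.
Qed.
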